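(* Let $\gamma$ be a smooth curve in the affine plane with strictly positive equi-affine curvature $\kappa$, and let $\mathscr{P}_\gamma$ be its osculating parabolic congruence, a curve in $(\mathrm{SL}(2),g)$. Then the full-affine arc-length of $\gamma$, $\int\sqrt{\kappa}\,\mathrm{d}s$, equals the pseudo-Riemannian arc-length $\int\sqrt{|g(\dot{\mathscr{P}}_\gamma,\dot{\mathscr{P}}_\gamma)|}\,\mathrm{d}t$ of $\mathscr{P}_\gamma$ (over corresponding parameter intervals).
   Context: The affine plane is $\mathbb{R}^2$ with area form $|u,v|=\det(u,v)$. For a nondegenerate curve parametrised by equi-affine arc-length $s$ (i.e. $|\gamma',\gamma''|=1$), $T=\gamma'$, $N=\gamma''$, and the equi-affine curvature $\kappa$ is defined by $\gamma'''=-\kappa\gamma'$; the full-affine arc-length element is $\mathrm{d}s_{\mathbf F}=\sqrt{\kappa}\,\mathrm{d}s$ (for $\kappa>0$). The osculating parabola of $\gamma$ at $\gamma(s_0)$ is the parabola $u\mapsto\gamma(s_0)+u\,T(s_0)+\tfrac{u^2}{2}N(s_0)$. A pointed parabola is a parabola together with a distinguished point on it; any two pointed parabolas are related by a unique orientation-preserving equi-affine transformation $p\mapsto Lp+b$ ($L\in\mathrm{SL}(2)$) mapping one to the other and distinguished point to distinguished point. Fix a standard pointed parabola. For an arbitrarily (regularly) parametrised curve $t\mapsto\gamma(t)$, let $\Phi(t)$ be the orientation-preserving equi-affine transformation carrying the standard pointed parabola to the osculating parabola of $\gamma$ at $\gamma(t)$ with distinguished point $\gamma(t)$; the osculating parabolic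 congruence is $\mathscr{P}_\gamma(t)=$ the linear part of $\Phi(t)$, an element of $\mathrm{SL}(2)$. The group $\mathrm{SL}(2)\subset\mathbb{R}^{2\times2}$ carries the bi-invariant Lorentzian metric $g(v_P,v_P)=-\det(v_P)$ for $v_P\in T_P\mathrm{SL}(2)\subseteq\mathbb{R}^{2\times2}$. *)

(* Defs.v *)
From Stdlib Require Import Reals.
From Coquelicot Require Import Coquelicot.
Open Scope R_scope.

Definition det2 (u v : R * R) : R := fst u * snd v - snd u * fst v.
Definition vadd (u v : R * R) : R * R := (fst u + fst v, snd u + snd v).

Record Mat2 := mkMat2 { m11 : R; m12 : R; m21 : R; m22 : R }.
Definition detM (M : Mat2) : R := m11 M * m22 M - m12 M * m21 M.
Definition mapply (M : Mat2) (p : R * R) : R * R :=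
  (m11 M * fst p + m12 M * snd p, m21 M * fst p + m22 M * snd p).

Definition affine (L : Mat2) (b : R * R) (p : R * R) : R * R := vadd (mapply L p) b.

Definition smooth_on (f : R -> R) (lo hi : R) : Prop :=
  forall (n : nat) (s : R), lo <= s <= hi -> ex_derive (Derive_n f n) s.

(* A (pointed) parabola given as an affine image of the model parabola
   u |-> (u, u^2/2) under p |-> M0 p + b0 (M0 invertible), distinguished point b0. *)
Definition parabola_set (M0 : Mat2) (b0 : R * R) (p : R * R) : Prop :=
  exists u : R, p = affine M0 b0 (u, u ^ 2 / 2).

(* Osculating parabola of the equi-affinely parametrised curve c = (x, y) at c(s0):
   u |-> c(s0) + u T(s0) + u^2/2 N(s0), with T = c', N = c''. *)
Definition osc_parabola_set (x y : R -> R) (s0 : R) (p : R * R) : Prop :=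
  exists u : R,
    p = (x s0 + u * Derive_n x 1 s0 + u ^ 2 / 2 * Derive_n x 2 s0,
         y s0 + u * Derive_n y 1 s0 + u ^ 2 / 2 * Derive_n y 2 s0).

Definition carries_pointed (L : Mat2) (b : R * R)
    (S1 : R * R -> Prop) (p1 : R * R) (S2 : R * R -> Prop) (p2 : R * R) : Prop :=
  (forall q, S2 q <-> exists p, S1 p /\ q = affine L b p) /\ affine L b p1 = p2.

(* L is the linear part of the orientation-preserving equi-affine transformation
   carrying the standard pointed parabola (parabola_set M0 b0, b0) to the osculating
   parabola of c = (x,y) at c(s0) with distinguished point pt. *)
Definition is_osc_congruence (M0 : Mat2) (b0 : R * R) (x y : R -> R) (s0 : R)
    (pt : R * R) (L : Mat2) : Prop :=
  detM L = 1 /\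
  exists b : R * R,
    carries_pointed L b (parabola_set M0 b0) b0 (osc_parabola_set x y s0) pt.

Definition dMat (P : R -> Mat2) (t : R) : Mat2 :=
  mkMat2 (Derive (fun u => m11 (P u)) t) (Derive (fun u => m12 (P u)) t)
         (Derive (fun u => m21 (P u)) t) (Derive (fun u => m22 (P u)) t).

(* The bi-invariant Lorentzian metric on SL(2): g(v,v) = - det v. *)
Definition g_metric (v : Mat2) : R := - detM v.

(* Main.v *)
Require Import Defs.
From Stdlib Require Import Reals Lra Psatz.
From Coquelicot Require Import Coquelicot.
Open Scope R_scope.

Lemma param_alg (T1 T2 N1 N2 A11 A12 A21 A22 : R) :
  T1*N2 - T2*N1 = 1 ->
  (forall u, exists v, A11*u + A12*(u^2/2) = v*T1 + v^2/2*N1 /\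
                       A21*u + A22*(u^2/2) = v*T2 + v^2/2*N2) ->
  exists al, A11 = al*T1 /\ A21 = al*T2 /\ A12 = al^2*N1 /\ A22 = al^2*N2.
Proof.
  intros HD H.
  set (al := A11*N2 - A21*N1). set (ga := A12*N2 - A22*N1).
  set (be := T1*A21 - T2*A11). set (de := T1*A22 - T2*A12).
  assert (E : forall u, be*u + de*(u^2/2) = (al*u + ga*(u^2/2))^2/2).
  { intro u. destruct (H u) as [v [H1 H2]].
    assert (Hf : al*u + ga*(u^2/2) = v).
    { unfold al, ga.
      replace ((A11 * N2 - A21 * N1) * u + (A12 * N2 - A22 * N1) * (u ^ 2 / 2))
        with ((A11*u + A12*(u^2/2))*N2 - (A21*u + A22*(u^2/2))*N1) by ring.
      rewrite H1, H2. transitivity (v*(T1*N2-T2*N1)); [ring | rewrite HD; ring]. }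
    rewrite Hf. unfold be, de.
    replace ((T1 * A21 - T2 * A11) * u + (T1 * A22 - T2 * A12) * (u ^ 2 / 2))
      with (T1*(A21*u + A22*(u^2/2)) - T2*(A11*u + A12*(u^2/2))) by ring.
    rewrite H1, H2. transitivity (v^2/2*(T1*N2-T2*N1)); [ring | rewrite HD; ring]. }
  pose proof (E 1) as E1. pose proof (E (-1)) as E2. pose proof (E 2) as E3. pose proof (E (-2)) as E4.
  assert (Hg2 : ga*ga = 0) by nra.
  assert (Hg : ga = 0) by nra.
  assert (Hb : be = 0) by nra.
  assert (Hd : de = al^2) by (rewrite Hg in *; nra).
  exists al. repeat split.
  - replace A11 with (A11 * (T1*N2 - T2*N1)) by (rewrite HD; ring).
    replace (al*T1) with (al*T1 + be*N1) by (rewrite Hb; ring). unfold al, be; ring.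
  - replace A21 with (A21 * (T1*N2 - T2*N1)) by (rewrite HD; ring).
    replace (al*T2) with (al*T2 + be*N2) by (rewrite Hb; ring). unfold al, be; ring.
  - replace A12 with (A12 * (T1*N2 - T2*N1)) by (rewrite HD; ring).
    rewrite <- Hd. replace (de*N1) with (ga*T1 + de*N1) by (rewrite Hg; ring). unfold ga, de; ring.
  - replace A22 with (A22 * (T1*N2 - T2*N1)) by (rewrite HD; ring).
    rewrite <- Hd. replace (de*N2) with (ga*T2 + de*N2) by (rewrite Hg; ring). unfold ga, de; ring.
Qed.

Lemma cube_inj (u v : R) : u^3 = v^3 -> u = v.
Proof. intro H.
  assert (H0 : (u - v) * (u^2 + u*v + v^2) = 0) by (transitivity (u^3 - v^3); [ring | rewrite H; ring]).
  destruct (Rmult_integral _ _ H0) as [H1|H1]; [lra|].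
  pose proof (pow2_ge_0 (2*u+v)). pose proof (pow2_ge_0 v).
  assert (Hv : v^2 = 0) by nra. assert (v = 0) by nra. subst v. assert (u = 0) by nra. lra.
Qed.

Lemma loc_int (a b t : R) : a < t < b -> locally t (fun u => a < u < b).
Proof. intros Ht.
  assert (He : 0 < Rmin (t - a) (b - t)) by (apply Rmin_glb_lt; lra).
  exists (mkposreal _ He). intros u Hu. simpl in Hu.
  unfold ball in Hu; simpl in Hu; unfold AbsRing_ball, abs, minus, plus, opp in Hu; simpl in Hu.
  apply Rabs_lt_between' in Hu. pose proof (Rmin_l (t-a) (b-t)). pose proof (Rmin_r (t-a) (b-t)). lra.
Qed.

Lemma cont_pt (f : R -> R) x : ex_derive f x -> continuity_pt f x.
Proof. intro H. apply continuity_pt_filterlim. apply (ex_derive_continuous f x H). Qed.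

Lemma P_form M0 b0 (x y : R -> R) s0 pt L :
  detM M0 <> 0 -> pt = (x s0, y s0) ->
  det2 (Derive_n x 1 s0, Derive_n y 1 s0) (Derive_n x 2 s0, Derive_n y 2 s0) = 1 ->
  is_osc_congruence M0 b0 x y s0 pt L ->
  exists al, al^3 = detM M0 /\
    m11 L = (al * Derive_n x 1 s0 * m22 M0 - al^2 * Derive_n x 2 s0 * m21 M0) / detM M0 /\
    m12 L = (al^2 * Derive_n x 2 s0 * m11 M0 - al * Derive_n x 1 s0 * m12 M0) / detM M0 /\
    m21 L = (al * Derive_n y 1 s0 * m22 M0 - al^2 * Derive_n y 2 s0 * m21 M0) / detM M0 /\
    m22 L = (al^2 * Derive_n y 2 s0 * m11 M0 - al * Derive_n y 1 s0 * m12 M0) / detM M0.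
Proof.
  intros Hd Hpt HD [HL [bb [Hcar Hp]]].
  unfold det2 in HD; cbn [fst snd] in HD.
  set (X1 := Derive_n x 1 s0) in *. set (X2 := Derive_n x 2 s0) in *.
  set (Y1 := Derive_n y 1 s0) in *. set (Y2 := Derive_n y 2 s0) in *.
  destruct L as [l11 l12 l21 l22]. destruct M0 as [p q r s].
  unfold detM in *; cbn [m11 m12 m21 m22] in *.
  destruct b0 as [c1 c2]. destruct bb as [e1 e2].
  rewrite Hpt in Hp. unfold affine, vadd, mapply in Hp; simpl in Hp.
  injection Hp as Hp1 Hp2.
  destruct (param_alg X1 Y1 X2 Y2 (l11*p + l12*r) (l11*q + l12*s) (l21*p + l22*r) (l21*q+l22*s))
    as [al [E1 [E2 [E3 E4]]]].
  - lra.
  - intro u. pose proof Hcar as Hc.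
    assert (HS : osc_parabola_set x y s0 (affine (mkMat2 l11 l12 l21 l22) (e1, e2) (affine (mkMat2 p q r s) (c1, c2) (u, u^2/2)))).
    { apply Hc. exists (affine (mkMat2 p q r s) (c1, c2) (u, u^2/2)). split; [exists u; reflexivity | reflexivity]. }
    destruct HS as [v Hv].
    exists v. unfold affine, vadd, mapply in Hv; pose proof (f_equal fst Hv) as Hv1; pose proof (f_equal snd Hv) as Hv2; cbn [fst snd m11 m12 m21 m22] in Hv1, Hv2.
    split.
    + transitivity (l11 * (p * u + q * (u ^ 2 / 2) + c1) + l12 * (r * u + s * (u ^ 2 / 2) + c2) + e1 - (l11 * c1 + l12 * c2 + e1)); [ring|].
      rewrite Hv1, Hp1. unfold X1, X2. ring.
    + transitivity (l21 * (p * u + q * (u ^ 2 / 2) + c1) + l22 * (r * u + s * (u ^ 2 / 2) + c2) + e2 - (l21 * c1 + l22 * c2 + e2)); [ring|].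
      rewrite Hv2, Hp2. unfold Y1, Y2. ring.
  - exists al. split.
    + transitivity ((l11*p + l12*r)*(l21*q+l22*s) - (l11*q + l12*s)*(l21*p + l22*r)).
      * rewrite E1, E2, E3, E4. transitivity (al^3 * (X1*Y2 - Y1*X2)); [rewrite HD; ring | ring].
      * transitivity ((l11 * l22 - l12 * l21) * (p*s - q*r)); [ring | rewrite HL; ring].
    + rewrite <- E1, <- E2, <- E3, <- E4. repeat split; field; exact Hd.
Qed.

Lemma sign_const (f : R -> R) a b : a < b ->
  (forall t, a <= t <= b -> continuity_pt f t) ->
  (forall t, a <= t <= b -> f t <> 0) ->
  (forall t, a <= t <= b -> 0 < f t) \/ (forall t, a <= t <= b -> f t < 0).
Proof.
  intros Hab Hc Hn.
  assert (Ha : a <= a <= b) by lra.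
  destruct (Rlt_or_le 0 (f a)) as [Hfa|Hfa].
  - left. intros t Ht. destruct (Rlt_or_le 0 (f t)) as [H|H]; auto. exfalso.
    assert (Hft : f t < 0) by (pose proof (Hn t Ht); lra).
    destruct (Req_dec t a) as [->|Hta]; [lra|].
    destruct (Ranalysis5.IVT_interv (fun u => - f u) a t) as [z [Hz Hfz]].
    + intros u Hu. apply (continuity_pt_opp f). apply Hc. lra.
    + lra.
    + lra.
    + lra.
    + apply (Hn z); lra.
  - right. assert (Hfa' : f a < 0) by (pose proof (Hn a Ha); lra).
    intros t Ht. destruct (Rlt_or_le (f t) 0) as [H|H]; auto. exfalso.
    assert (Hft : 0 < f t) by (pose proof (Hn t Ht); lra).
    destruct (Req_dec t a) as [->|Hta]; [lra|].
    destruct (Ranalysis5.IVT_interv f a t) as [z [Hz Hfz]].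
    + intros u Hu. apply Hc. lra.
    + lra.
    + lra.
    + lra.
    + apply (Hn z); lra.
Qed.

Lemma mono_range (g dg : R -> R) a b : a < b ->
  (forall t, a <= t <= b -> is_derive g t (dg t)) ->
  (forall t, a <= t <= b -> 0 < dg t) ->
  forall t, a <= t <= b -> g a <= g t <= g b.
Proof.
  intros Hab Hd Hp t Ht.
  assert (Hcont : forall u, a <= u <= b -> continuity_pt g u).
  { intros u Hu. apply continuity_pt_filterlim. apply (ex_derive_continuous g u).
    exists (dg u). apply Hd; exact Hu. }
  split.
  - destruct (Req_dec t a) as [->|Hta]; [lra|].
    destruct (MVT_gen g a t dg) as [c [Hc Heq]].
    + intros u Hu. rewrite Rmin_left in Hu by lra. rewrite Rmax_right in Hu by lra. apply Hd; lra.
    + intros u Hu. rewrite Rmin_left in Hu by lra. rewrite Rmax_right in Hu by lra. apply Hcont; lra.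
    + rewrite Rmin_left in Hc by lra. rewrite Rmax_right in Hc by lra.
      pose proof (Hp c ltac:(lra)). nra.
  - destruct (Req_dec t b) as [->|Htb]; [lra|].
    destruct (MVT_gen g t b dg) as [c [Hc Heq]].
    + intros u Hu. rewrite Rmin_left in Hu by lra. rewrite Rmax_right in Hu by lra. apply Hd; lra.
    + intros u Hu. rewrite Rmin_left in Hu by lra. rewrite Rmax_right in Hu by lra. apply Hcont; lra.
    + rewrite Rmin_left in Hc by lra. rewrite Rmax_right in Hc by lra.
      pose proof (Hp c ltac:(lra)). nra.
Qed.
Lemma comp_der (f sigma : R->R) c1 c2 d t : 
  ex_derive sigma t -> ex_derive (Derive_n f 1) (sigma t) -> ex_derive (Derive_n f 2) (sigma t) ->
  is_derive (fun u => (c1 * Derive_n f 1 (sigma u) + c2 * Derive_n f 2 (sigma u)) / d) t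
    ((c1 * Derive_n f 2 (sigma t) + c2 * Derive_n f 3 (sigma t)) * Derive sigma t / d).
Proof.
  intros Hs H1 H2.
  auto_derive.
  - repeat split; auto.
  - change (Derive (fun x => sigma x) t) with (Derive sigma t).
    change (Derive (fun x => Derive (fun x0 => f x0) x) (sigma t)) with (Derive_n f 2 (sigma t)).
    change (Derive (fun x => Derive (fun x0 => Derive (fun x1 => f x1) x0) x) (sigma t)) with (Derive_n f 3 (sigma t)).
    unfold Rdiv; ring.
Qed.

Theorem mainTheorem6
  (x y : R -> R)            (* equi-affine arc-length parametrisation c(s) = (x s, y s) *)
  (kappa : R -> R)          (* equi-affine curvature *)
  (sigma : R -> R)          (* t |-> s = sigma t, the equi-affine arc-length parameter *)
  (gamma : R -> R * R)      (* the curve in its arbitrary regular parameter t *)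
  (P : R -> Mat2)           (* osculating parabolic congruence *)
  (M0 : Mat2) (b0 : R * R)  (* the fixed standard pointed parabola *)
  (a b : R) :
  a < b ->
  detM M0 <> 0 ->
  smooth_on sigma a b ->
  (forall t, a <= t <= b -> Derive sigma t <> 0) ->
  smooth_on x (Rmin (sigma a) (sigma b)) (Rmax (sigma a) (sigma b)) ->
  smooth_on y (Rmin (sigma a) (sigma b)) (Rmax (sigma a) (sigma b)) ->
  (forall s, Rmin (sigma a) (sigma b) <= s <= Rmax (sigma a) (sigma b) ->
     det2 (Derive_n x 1 s, Derive_n y 1 s) (Derive_n x 2 s, Derive_n y 2 s) = 1) ->
  (forall s, Rmin (sigma a) (sigma b) <= s <= Rmax (sigma a) (sigma b) ->
     Derive_n x 3 s = - kappa s * Derive_n x 1 s /\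
     Derive_n y 3 s = - kappa s * Derive_n y 1 s) ->
  (forall s, Rmin (sigma a) (sigma b) <= s <= Rmax (sigma a) (sigma b) ->
     0 < kappa s) ->
  (forall t, a <= t <= b -> gamma t = (x (sigma t), y (sigma t))) ->
  (forall t, a <= t <= b -> is_osc_congruence M0 b0 x y (sigma t) (gamma t) (P t)) ->
  RInt (fun s => sqrt (kappa s)) (Rmin (sigma a) (sigma b)) (Rmax (sigma a) (sigma b))
  = RInt (fun t => sqrt (Rabs (g_metric (dMat P t)))) a b.
Proof.
  intros Hab Hd0 Hsm Hs0 Hx Hy HD Hk Hkp Hgam Hcong.
  set (lo := Rmin (sigma a) (sigma b)) in *. set (hi := Rmax (sigma a) (sigma b)) in *.
  assert (HsD : forall t, a <= t <= b -> is_derive sigma t (Derive sigma t)).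
  { intros t Ht. apply Derive_correct. exact (Hsm 0%nat t Ht). }
  assert (HsDc : forall t, a <= t <= b -> continuous (Derive sigma) t).
  { intros t Ht. apply (@ex_derive_continuous R_AbsRing R_NormedModule). exact (Hsm 1%nat t Ht). }
  assert (Hsign : (forall t, a <= t <= b -> 0 < Derive sigma t) \/
                  (forall t, a <= t <= b -> Derive sigma t < 0)).
  { apply sign_const; auto. intros t Ht. apply continuity_pt_filterlim. apply HsDc; auto. }
  assert (Hrange : forall t, a <= t <= b -> lo <= sigma t <= hi).
  { intros t Ht. unfold lo, hi. destruct Hsign as [Hp|Hn].
    - pose proof (mono_range sigma (Derive sigma) a b Hab HsD Hp t Ht).
      pose proof (mono_range sigma (Derive sigma) a b Hab HsD Hp b ltac:(lra)).
      rewrite Rmin_left, Rmax_right; lra.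
    - assert (HD' : forall t, a <= t <= b -> is_derive (fun u => - sigma u) t (- Derive sigma t)).
      { intros u Hu. apply (is_derive_opp sigma). auto. }
      assert (Hp' : forall t, a <= t <= b -> 0 < - Derive sigma t) by (intros u Hu; pose proof (Hn u Hu); lra).
      pose proof (mono_range (fun u => - sigma u) (fun u => - Derive sigma u) a b Hab HD' Hp' t Ht).
      pose proof (mono_range (fun u => - sigma u) (fun u => - Derive sigma u) a b Hab HD' Hp' b ltac:(lra)).
      simpl in *. rewrite Rmin_right, Rmax_left; lra. }
  assert (Ha : a <= a <= b) by lra.
  destruct (P_form M0 b0 x y (sigma a) (gamma a) (P a) Hd0 (Hgam a Ha) (HD _ (Hrange a Ha)) (Hcong a Ha))
    as [al0 [Hal0 _]].
  set (d := detM M0) in *.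
  assert (HPf : forall t, a <= t <= b ->
    m11 (P t) = (al0 * Derive_n x 1 (sigma t) * m22 M0 - al0^2 * Derive_n x 2 (sigma t) * m21 M0) / d /\
    m12 (P t) = (al0^2 * Derive_n x 2 (sigma t) * m11 M0 - al0 * Derive_n x 1 (sigma t) * m12 M0) / d /\
    m21 (P t) = (al0 * Derive_n y 1 (sigma t) * m22 M0 - al0^2 * Derive_n y 2 (sigma t) * m21 M0) / d /\
    m22 (P t) = (al0^2 * Derive_n y 2 (sigma t) * m11 M0 - al0 * Derive_n y 1 (sigma t) * m12 M0) / d).
  { intros t Ht.
    destruct (P_form M0 b0 x y (sigma t) (gamma t) (P t) Hd0 (Hgam t Ht) (HD _ (Hrange t Ht)) (Hcong t Ht))
      as [al [Hal HH]].
    assert (al = al0) by (apply cube_inj; transitivity d; [exact Hal | symmetry; exact Hal0]). subst al. exact HH. }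
  set (kt := fun s => - (Derive_n x 3 s * Derive_n x 1 s + Derive_n y 3 s * Derive_n y 1 s) *
                     / (Derive_n x 1 s * Derive_n x 1 s + Derive_n y 1 s * Derive_n y 1 s)).
  assert (Hden : forall s, lo <= s <= hi ->
             Derive_n x 1 s * Derive_n x 1 s + Derive_n y 1 s * Derive_n y 1 s <> 0).
  { intros s Hs H0. pose proof (HD s Hs) as H1. unfold det2 in H1; cbn [fst snd] in H1.
    assert (Derive_n x 1 s = 0) by nra. assert (Derive_n y 1 s = 0) by nra.
    rewrite H, H2 in H1. lra. }
  assert (Hkt : forall s, lo <= s <= hi -> kt s = kappa s).
  { intros s Hs. unfold kt. destruct (Hk s Hs) as [E1 E2]. rewrite E1, E2. field. apply Hden; auto. }
  assert (Hktc : forall s, lo <= s <= hi -> continuous kt s).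
  { intros s Hs.
    assert (C1 : continuous (Derive_n x 1) s) by
      (apply (@ex_derive_continuous R_AbsRing R_NormedModule); exact (Hx 1%nat s Hs)).
    assert (C2 : continuous (Derive_n y 1) s) by
      (apply (@ex_derive_continuous R_AbsRing R_NormedModule); exact (Hy 1%nat s Hs)).
    assert (C3 : continuous (Derive_n x 3) s) by
      (apply (@ex_derive_continuous R_AbsRing R_NormedModule); exact (Hx 3%nat s Hs)).
    assert (C4 : continuous (Derive_n y 3) s) by
      (apply (@ex_derive_continuous R_AbsRing R_NormedModule); exact (Hy 3%nat s Hs)).
    unfold kt.
    apply (@continuous_mult R_UniformSpace R_AbsRing).
    - apply (@continuous_opp R_UniformSpace R_AbsRing R_NormedModule (fun s => Derive_n x 3 s * Derive_n x 1 s + Derive_n y 3 s * Derive_n y 1 s)).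
      apply (@continuous_plus R_UniformSpace R_AbsRing R_NormedModule (fun s => Derive_n x 3 s * Derive_n x 1 s) (fun s => Derive_n y 3 s * Derive_n y 1 s));
      apply (@continuous_mult R_UniformSpace R_AbsRing); assumption.
    - apply continuous_Rinv_comp; [|apply Hden; auto].
      apply (@continuous_plus R_UniformSpace R_AbsRing R_NormedModule (fun s => Derive_n x 1 s * Derive_n x 1 s) (fun s => Derive_n y 1 s * Derive_n y 1 s));
      apply (@continuous_mult R_UniformSpace R_AbsRing); assumption. }
  assert (Hint : forall t, a < t < b ->
     sqrt (Rabs (g_metric (dMat P t))) = Rabs (Derive sigma t) * sqrt (kt (sigma t))).
  { intros t Ht. assert (Ht' : a <= t <= b) by lra.
    pose proof (Hrange t Ht') as Hr.
    assert (Es : ex_derive sigma t) by exact (Hsm 0%nat t Ht').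
    assert (E1 : ex_derive (Derive_n x 1) (sigma t)) by exact (Hx 1%nat _ Hr).
    assert (E2 : ex_derive (Derive_n x 2) (sigma t)) by exact (Hx 2%nat _ Hr).
    assert (F1 : ex_derive (Derive_n y 1) (sigma t)) by exact (Hy 1%nat _ Hr).
    assert (F2 : ex_derive (Derive_n y 2) (sigma t)) by exact (Hy 2%nat _ Hr).
    assert (Hl := loc_int a b t Ht).
    assert (D11 : Derive (fun u => m11 (P u)) t =
       ((al0 * m22 M0) * Derive_n x 2 (sigma t) + (- (al0^2 * m21 M0)) * Derive_n x 3 (sigma t)) * Derive sigma t / d).
    { apply is_derive_unique.
      eapply is_derive_ext_loc; [| apply (comp_der x sigma (al0 * m22 M0) (- (al0^2 * m21 M0)) d t Es E1 E2)].
      apply (filter_imp (fun u => a < u < b)); [| exact Hl]. intros u Hu. cbv beta. rewrite (proj1 (HPf u ltac:(lra))). match goal with |- ?A = ?B => change (@eq R A B) end; unfold Rdiv; ring. }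
    assert (D12 : Derive (fun u => m12 (P u)) t =
       ((- (al0 * m12 M0)) * Derive_n x 2 (sigma t) + (al0^2 * m11 M0) * Derive_n x 3 (sigma t)) * Derive sigma t / d).
    { apply is_derive_unique.
      eapply is_derive_ext_loc; [| apply (comp_der x sigma (- (al0 * m12 M0)) (al0^2 * m11 M0) d t Es E1 E2)].
      apply (filter_imp (fun u => a < u < b)); [| exact Hl]. intros u Hu. cbv beta. rewrite (proj1 (proj2 (HPf u ltac:(lra)))). match goal with |- ?A = ?B => change (@eq R A B) end; unfold Rdiv; ring. }
    assert (D21 : Derive (fun u => m21 (P u)) t =
       ((al0 * m22 M0) * Derive_n y 2 (sigma t) + (- (al0^2 * m21 M0)) * Derive_n y 3 (sigma t)) * Derive sigma t / d).
    { apply is_derive_unique.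
      eapply is_derive_ext_loc; [| apply (comp_der y sigma (al0 * m22 M0) (- (al0^2 * m21 M0)) d t Es F1 F2)].
      apply (filter_imp (fun u => a < u < b)); [| exact Hl]. intros u Hu. cbv beta. rewrite (proj1 (proj2 (proj2 (HPf u ltac:(lra))))). match goal with |- ?A = ?B => change (@eq R A B) end; unfold Rdiv; ring. }
    assert (D22 : Derive (fun u => m22 (P u)) t =
       ((- (al0 * m12 M0)) * Derive_n y 2 (sigma t) + (al0^2 * m11 M0) * Derive_n y 3 (sigma t)) * Derive sigma t / d).
    { apply is_derive_unique.
      eapply is_derive_ext_loc; [| apply (comp_der y sigma (- (al0 * m12 M0)) (al0^2 * m11 M0) d t Es F1 F2)].
      apply (filter_imp (fun u => a < u < b)); [| exact Hl]. intros u Hu. cbv beta. rewrite (proj2 (proj2 (proj2 (HPf u ltac:(lra))))). match goal with |- ?A = ?B => change (@eq R A B) end; unfold Rdiv; ring. }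
    assert (Hdet : detM (dMat P t) = (Derive sigma t)^2 * kappa (sigma t)).
    { unfold detM, dMat; cbn [m11 m12 m21 m22]. rewrite D11, D12, D21, D22.
      destruct (Hk _ Hr) as [K1 K2]. rewrite K1, K2.
      pose proof (HD _ Hr) as HD1. unfold det2 in HD1; cbn [fst snd] in HD1.
      transitivity ((Derive sigma t)^2 * kappa (sigma t) * al0^3 *
         (Derive_n x 1 (sigma t) * Derive_n y 2 (sigma t) - Derive_n y 1 (sigma t) * Derive_n x 2 (sigma t)) *
         (m11 M0 * m22 M0 - m12 M0 * m21 M0) / (d * d)).
      - field. exact Hd0.
      - rewrite HD1, Hal0. unfold d, detM. field. exact Hd0. }
    unfold g_metric. rewrite Hdet, (Hkt _ Hr).
    pose proof (Hkp _ Hr).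
    rewrite Rabs_Ropp, Rabs_right by (apply Rle_ge; apply Rmult_le_pos; [apply pow2_ge_0 | lra]).
    rewrite sqrt_mult by (try apply pow2_ge_0; lra).
    rewrite <- Rsqr_pow2, sqrt_Rsqr_abs. reflexivity. }
  set (h := fun s => sqrt (kt s)).
  assert (Hhc : forall z, lo <= z <= hi -> continuous h z).
  { intros z Hz. unfold h. apply continuous_sqrt_comp. apply Hktc; auto. }
  assert (HL : RInt (fun s => sqrt (kappa s)) lo hi = RInt h lo hi).
  { apply RInt_ext. intros z Hz. unfold h. rewrite Hkt; [reflexivity|].
    unfold lo, hi in *. rewrite Rmin_left in Hz by (apply Rmin_Rmax). rewrite Rmax_right in Hz by (apply Rmin_Rmax). lra. }
  assert (HR : RInt (fun t => sqrt (Rabs (g_metric (dMat P t)))) a b =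
               RInt (fun t => Rabs (Derive sigma t) * h (sigma t)) a b).
  { apply RInt_ext. intros z Hz. rewrite Rmin_left in Hz by lra. rewrite Rmax_right in Hz by lra.
    apply Hint. exact Hz. }
  assert (Hcomp1 : forall z, Rmin a b <= z <= Rmax a b -> continuous h (sigma z)).
  { intros z Hz. rewrite Rmin_left in Hz by lra. rewrite Rmax_right in Hz by lra. apply Hhc, Hrange; auto. }
  assert (Hcomp2 : forall z, Rmin a b <= z <= Rmax a b -> is_derive sigma z (Derive sigma z) /\ continuous (Derive sigma) z).
  { intros z Hz. rewrite Rmin_left in Hz by lra. rewrite Rmax_right in Hz by lra. split; [apply HsD|apply HsDc]; auto. }
  pose proof (RInt_comp h sigma (Derive sigma) a b Hcomp1 Hcomp2) as Hc.
  pose proof (is_RInt_comp h sigma (Derive sigma) a b Hcomp1 Hcomp2) as Hc'.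
  rewrite HL, HR.
  destruct Hsign as [Hp|Hn].
  - pose proof (mono_range sigma (Derive sigma) a b Hab HsD Hp b ltac:(lra)) as Hab'.
    unfold lo, hi. rewrite Rmin_left, Rmax_right by lra.
    rewrite <- Hc. apply RInt_ext. intros z Hz. rewrite Rmin_left in Hz by lra. rewrite Rmax_right in Hz by lra.
    rewrite Rabs_right by (apply Rle_ge, Rlt_le, Hp; lra). reflexivity.
  - assert (HD' : forall t, a <= t <= b -> is_derive (fun u => - sigma u) t (- Derive sigma t)).
    { intros u Hu. apply (is_derive_opp sigma). auto. }
    assert (Hp' : forall t, a <= t <= b -> 0 < - Derive sigma t) by (intros u Hu; pose proof (Hn u Hu); lra).
    pose proof (mono_range (fun u => - sigma u) (fun u => - Derive sigma u) a b Hab HD' Hp' b ltac:(lra)) as Hab'.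
    simpl in Hab'.
    unfold lo, hi. rewrite Rmin_right, Rmax_left by lra.
    transitivity (RInt (fun t => opp (scal (Derive sigma t) (h (sigma t)))) a b).
    + etransitivity; [| symmetry; apply (RInt_opp _ _ _ (ex_intro _ _ Hc'))].
      etransitivity; [| symmetry; exact (f_equal opp Hc)].
      symmetry; apply opp_RInt_swap.
      apply ex_RInt_continuous. intros z Hz. apply Hhc. unfold lo, hi. exact Hz.
    + apply RInt_ext. intros z Hz. rewrite Rmin_left in Hz by lra. rewrite Rmax_right in Hz by lra.
      rewrite Rabs_left by (apply Hn; lra).
      change (opp (scal (Derive sigma z) (h (sigma z)))) with (- (Derive sigma z * h (sigma z))). match goal with |- ?A = ?B => change (@eq R A B) end; ring.
Qed.
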